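(* Let $m\ge 2$, $\mathfrak m=1/(2m-1)$, and $s_n=\sum_{k=0}^{n-1}(-\mathfrak m)^k$ for $n\ge 1$, $s_0=0$. Let $x_0x_1x_2\dots$ be a random freely reduced infinite word in $m$ generators. For any letters $x,y$ (not necessarily distinct) and any $n\ge1$, the conditional probability $P_n(x,y)=\Pr(x_n=x\mid x_0=y)$ lies between $\mathfrak m\cdot s_{n-1}$ and $\mathfrak m\cdot s_n$ (i.e. between the smaller and the larger of these two numbers). In particular, $$\frac{2m-2}{(2m-1)^2}\le \Pr(x_2=x\mid x_0=y)\le \frac1{2m-1}.$$
   Context: Letters are the $2m$ elements $a_1^{\pm1},\dots,a_m^{\pm1}$. A random freely reduced infinite word is chosen so that $x_0$ is uniform among the $2m$ letters and each $x_{i+1}$ is uniform among the $2m-1$ letters different from $x_i^{-1}$. *)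

(* Defs.v *)
From HB Require Import structures.
From mathcomp Require Import all_boot all_order all_algebra.
Set Implicit Arguments. Unset Strict Implicit. Unset Printing Implicit Defensive.
Import Order.TTheory GRing.Theory Num.Theory.
Local Open Scope ring_scope.

(* Letters a_i^{+1} / a_i^{-1}: (i, false) = a_i, (i, true) = a_i^{-1}. *)
Definition letter (m : nat) : finType := ('I_m * bool)%type.

Definition linv (m : nat) (a : letter m) : letter m := (a.1, ~~ a.2).

Definition word (m n : nat) := {ffun 'I_n.+1 -> letter m}.

Definition reduced (m n : nat) (w : word m n) : bool :=
  [forall i : 'I_n, w (lift ord0 i) != linv (w (widen_ord (leqnSn n) i))].

(* Law of the initial segment x_0 ... x_n of the random freely reduced word:
   x_0 uniform among 2m letters, each next letter uniform among the 2m-1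
   letters different from the inverse of the previous one. *)
Definition word_prob (R : realFieldType) (m n : nat) (w : word m n) : R :=
  if reduced w then ((2 * m)%:R)^-1 * (((2 * m).-1)%:R ^+ n)^-1 else 0.

Definition pr_first (R : realFieldType) (m n : nat) (y : letter m) : R :=
  \sum_(w : word m n | w ord0 == y) word_prob R w.

Definition pr_joint (R : realFieldType) (m n : nat) (x y : letter m) : R :=
  \sum_(w : word m n | (w ord0 == y) && (w ord_max == x)) word_prob R w.

Definition Pn (R : realFieldType) (m n : nat) (x y : letter m) : R :=
  pr_joint R n x y / pr_first R n y.

Definition frakm (R : realFieldType) (m : nat) : R := (((2 * m).-1)%:R)^-1.

Definition s_ (R : realFieldType) (m n : nat) : R :=
  \sum_(k < n) (- frakm R m) ^+ k.

(* Main.v *)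
Require Import Defs.
From HB Require Import structures.
From mathcomp Require Import all_boot all_order all_algebra.
From mathcomp Require Import zify ring lra.
Set Implicit Arguments. Unset Strict Implicit. Unset Printing Implicit Defensive.
Import Order.TTheory GRing.Theory Num.Theory.
Local Open Scope ring_scope.

Lemma reducedE (m n : nat) (w : word m n) :
  reduced w = [forall i : 'I_n, w (inord i.+1) != linv (w (inord i))].
Proof.
rewrite /reduced; apply: eq_forallb => i.
have -> : lift ord0 i = inord i.+1 by apply: val_inj; rewrite /= inordK ?ltnS // /bump leq0n.
have -> : widen_ord (leqnSn n) i = inord i.
  by apply: val_inj; rewrite /= inordK // ltnS ltnW.
by [].
Qed.

Definition ext (m n : nat) (w : word m n) (a : letter m) : word m n.+1 :=
  [ffun i : 'I_n.+2 => if (i <= n)%N then w (inord i) else a].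

Definition init (m n : nat) (w : word m n.+1) : word m n :=
  [ffun i : 'I_n.+1 => w (inord i)].

Lemma ext_ord0 m n (w : word m n) a : ext w a ord0 = w ord0.
Proof. by rewrite ffunE /=; congr (w _); apply: val_inj; rewrite /= inordK. Qed.

Lemma ext_max m n (w : word m n) a : ext w a ord_max = a.
Proof. by rewrite ffunE /= ltnn. Qed.

Lemma reduced_ext m n (w : word m n) a :
  reduced (ext w a) = reduced w && (a != linv (w ord_max)).
Proof.
have hmax : (inord n : 'I_n.+1) = ord_max by apply: val_inj; rewrite /= inordK.
rewrite !reducedE; apply/forallP/andP.
- move=> H; split.
    apply/forallP => i; have := H (widen_ord (leqnSn _) i).
    have hi := ltn_ord i.
    rewrite !ffunE /= !inordK; try lia.
    have -> : (i.+1 <= n)%N by [].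
    by rewrite (ltnW hi).
  have := H ord_max; rewrite !ffunE /= !inordK // ltnn leqnn.
  by rewrite hmax.
- move=> [H Ha] i.
  have {}H : forall j : 'I_n, w (inord j.+1) != linv (w (inord j)) by move=> j; exact: (forallP H j).
  have hi := ltn_ord i.
  rewrite !ffunE /= !inordK; try lia.
  rewrite (_ : (i <= n)%N = true); last by lia.
  case: (ltnP i n) => hin.
    by have := H (Ordinal hin).
  have e : nat_of_ord i = n by lia.
  by rewrite e hmax.
Qed.

Lemma init_ext m n (w : word m n) a : init (ext w a) = w.
Proof.
apply/ffunP => j; have hj := ltn_ord j.
rewrite !ffunE inordK; last by lia.
rewrite (_ : (j <= n)%N = true); last by lia.
by rewrite inord_val.
Qed.

Lemma ext_init m n (w : word m n.+1) : ext (init w) (w ord_max) = w.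
Proof.
apply/ffunP => i; have hi := ltn_ord i.
rewrite !ffunE; case: ifP => h.
  rewrite inordK; last by lia.
  by rewrite inord_val.
congr (w _); apply: val_inj => /=; lia.
Qed.

Lemma sum_ext (R : realFieldType) m n (F : word m n.+1 -> R) :
  \sum_(w' : word m n.+1) F w' = \sum_(w : word m n) \sum_(a : letter m) F (ext w a).
Proof.
rewrite pair_big /=.
rewrite (reindex (fun p : word m n * letter m => ext p.1 p.2)) //=.
exists (fun w' => (init w', w' ord_max)) => [[w a] _ | w' _] /=.
  by rewrite init_ext ext_max.
by rewrite ext_init.
Qed.

Lemma between_g (R : realFieldType) (f u v t : R) : 0 <= f ->
  Num.min u v <= t -> t <= Num.max u v ->
  Num.min (f*(1-u)) (f*(1-v)) <= f*(1-t) /\ f*(1-t) <= Num.max (f*(1-u)) (f*(1-v)).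
Proof.
move=> hf; case: (leP u v) => huv h1 h2;
  case: (leP (f*(1-u)) (f*(1-v))) => h3; split; nra.
Qed.

Lemma linvK m : involutive (@linv m).
Proof. by case=> i b; rewrite /linv /= negbK. Qed.

Lemma linv_eq m (x z : letter m) : (x == linv z) = (z == linv x).
Proof.
by apply/eqP/eqP => ->; rewrite linvK.
Qed.

Section P.
Variable R : realFieldType.
Variable m : nat.
Hypothesis hm : (0 < m)%N.
Let q : R := ((2 * m).-1)%:R.
Lemma qpos : 0 < q.
Proof. rewrite /q ltr0n; lia. Qed.

Lemma wp_ext n (w : word m n) a : word_prob R (ext w a) =
  if a != linv (w ord_max) then word_prob R w / q else 0.
Proof.
rewrite /word_prob reduced_ext; case: (reduced w); case: (a != _) => //=.
- by rewrite exprSr invfM mulrA.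
- by rewrite mul0r.
Qed.

Lemma pj_S n (x y : letter m) : pr_joint R n.+1 x y = (pr_first R n y - pr_joint R n (linv x) y) / q.
Proof.
rewrite /pr_joint big_mkcond sum_ext.
transitivity (\sum_(w : word m n) (if w ord0 == y then
   (if x != linv (w ord_max) then word_prob R w / q else 0) else 0)).
  apply: eq_bigr => w _.
  rewrite (bigD1 x) //= ext_ord0 ext_max eqxx andbT big1 ?addr0.
    by rewrite wp_ext; case: (w ord0 == y).
  by move=> a hax; rewrite ext_ord0 ext_max (negbTE hax) andbF.
rewrite /pr_first [in RHS](bigID (fun w : word m n => w ord_max == linv x)) /=.
rewrite addrC addrK mulr_suml [RHS]big_mkcond; apply: eq_bigr => w _.
rewrite linv_eq; case: (w ord0 == y); case: (w ord_max == linv x) => //=.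
Qed.

Lemma card_ne (b : letter m) : #|(fun a : letter m => a != b)| = (2 * m).-1.
Proof.
rewrite (@eq_card _ _ (predC1 b)) // cardC1 /letter card_prod card_ord card_bool.
by rewrite mulnC.
Qed.

Lemma pf_S n (y : letter m) : pr_first R n.+1 y = pr_first R n y.
Proof.
rewrite /pr_first big_mkcond sum_ext [RHS]big_mkcond; apply: eq_bigr => w _.
under eq_bigr do rewrite ext_ord0.
case: (w ord0 == y); last by rewrite big1.
under eq_bigr do rewrite wp_ext.
rewrite -big_mkcond sumr_const card_ne -mulr_natr.
have := qpos; rewrite /q => hq; field; lra.
Qed.

Lemma pf_0 (y : letter m) : pr_first R 0 y = ((2 * m)%:R)^-1.
Proof.
rewrite /pr_first (bigD1 [ffun _ => y]) ?ffunE //= big1 ?addr0.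
  rewrite /word_prob (_ : reduced _ = true); last by apply/forallP => [[]].
  by rewrite expr0 invr1 mulr1.
move=> w /andP [/eqP h1 h2]; exfalso; move/negP: h2; apply; apply/eqP.
by apply/ffunP => i; rewrite ord1 ffunE.
Qed.

Lemma pf_n n (y : letter m) : pr_first R n y = ((2 * m)%:R)^-1.
Proof. by elim: n => [|n IH]; rewrite ?pf_S ?pf_0. Qed.

Lemma pj_0 (x y : letter m) : pr_joint R 0 x y = if x == y then pr_first R 0 y else 0.
Proof.
rewrite /pr_joint /pr_first (_ : (ord_max : 'I_1) = ord0); last by apply: val_inj.
case: eqVneq => [->|hxy].
  by apply: eq_bigl => w; rewrite andbb.
by rewrite big1 // => w /andP [/eqP h1 /eqP h2]; move: hxy; rewrite -h1 -h2 eqxx.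
Qed.

Lemma Pn_0 (x y : letter m) : Pn R 0 x y = (x == y)%:R.
Proof.
rewrite /Pn pj_0; case: (x == y); last by rewrite mul0r.
rewrite divff // pf_0 invr_eq0 pnatr_eq0; lia.
Qed.

Lemma Pn_S n (x y : letter m) : Pn R n.+1 x y = q^-1 * (1 - Pn R n (linv x) y).
Proof.
rewrite /Pn pj_S pf_S !pf_n.
have h : ((2 * m)%:R : R)^-1 != 0 by rewrite invr_eq0 pnatr_eq0; lia.
have := qpos => hq.
field; rewrite !pnatr_eq0; apply/andP; split; lia.
Qed.

End P.

Lemma s_S (R : realFieldType) m k : s_ R m k.+1 = 1 - frakm R m * s_ R m k.
Proof.
rewrite /s_ big_ord_recl expr0 mulr_sumr -sumrN; congr (_ + _).
by apply: eq_bigr => i _; rewrite lift0 exprS mulNr.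
Qed.

Lemma s_0 (R : realFieldType) m : s_ R m 0 = 0.
Proof. by rewrite /s_ big_ord0. Qed.

Theorem corollary2p2 (R : realFieldType) (m : nat) (hm : (2 <= m)%N) :
  (forall (n : nat) (x y : letter m), (1 <= n)%N ->
     Num.min (frakm R m * s_ R m n.-1) (frakm R m * s_ R m n) <= Pn R n x y /\
     Pn R n x y <= Num.max (frakm R m * s_ R m n.-1) (frakm R m * s_ R m n)) /\
  (forall x y : letter m,
     ((2 * m - 2)%:R / ((2 * m - 1)%:R ^+ 2) <= Pn R 2 x y /\
      Pn R 2 x y <= ((2 * m - 1)%:R)^-1 :> R)).
Proof.
have hm0 : (0 < m)%N by lia.
set f := frakm R m.
have hf : 0 <= f by rewrite /f /frakm invr_ge0 ler0n.
pose a k := f * s_ R m k.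
pose b n := if n is k.+1 then a k else 1.
have aS k : a k.+1 = f * (1 - a k) by rewrite /a s_S.
have bS n : f * (1 - b n) = a n.
  by case: n => [|k]; rewrite /b /a ?s_0 ?subrr ?mulr0 // -/(a k) -aS.
have Q : forall n (x y : letter m),
    Num.min (b n) (a n) <= Pn R n x y /\ Pn R n x y <= Num.max (b n) (a n).
  elim=> [|n IH] x y.
    rewrite Pn_0 // /b /a s_0 mulr0.
    rewrite (min_r ler01) (max_l ler01); case: (x == y); rewrite /= ?mulr0n ?mulr1n; split; lra.
  rewrite Pn_S // -/(frakm R m) -/f.
  have [h1 h2] := IH (linv x) y.
  have := between_g hf h1 h2; rewrite bS -aS.
  by [].
split.
  move=> [|n] x y // _; exact: (Q n.+1 x y).
move=> x y; have [h1 h2] := Q 2 x y.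
have ha1 : a 1 = f by rewrite aS /a s_0 mulr0 subr0 mulr1.
have ha2 : a 2 = f * (1 - f) by rewrite aS ha1.
rewrite (_ : b 2 = a 1) // ha1 ha2 in h1 h2.
have hq : (2 * m - 1)%:R = ((2 * m).-1)%:R :> R by rewrite subn1.
have e : (2 * m).-1 = (2 * m - 2).+1 by lia.
have hfq : f = ((2 * m - 1)%:R)^-1 by rewrite hq.
set q := (2 * m - 2)%:R : R.
have hq2 : (2 * m - 1)%:R = q + 1 :> R by rewrite hq e -natr1.
have q0 : 0 <= q by rewrite ler0n.
rewrite hq2 in hfq; rewrite hq2 -hfq.
have -> : q / (q + 1) ^+ 2 = f * (1 - f) by rewrite hfq; field; lra.
have hle : f * (1 - f) <= f by nra.
rewrite (min_r hle) (max_l hle) in h1 h2; split; lra.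
Qed.
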